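(* Let $Q$ be a finite multiset of tuples (all with the same QI values) and $l\ge1$ an integer. Let $\dot{Q}$ be obtained from $Q$ by repeatedly removing one tuple whose SA value is a pillar of the current multiset, until the current multiset is $l$-eligible (ties among pillars broken arbitrarily). Then for every $l$-eligible sub-multiset $Q' \subseteq Q$ and every SA value $v$, $h(Q',v) \le h(\dot{Q},v)$.
   Context: Tuples carry a sensitive attribute (SA) value. For a multiset $Q$ of tuples and an SA value $v$, $h(Q,v)$ is the number of tuples of $Q$ with SA value $v$; the pillar height is $h(Q)=\max_v h(Q,v)$, and a pillar of $Q$ is an SA value $v$ with $h(Q,v)=h(Q)$. $Q$ is $l$-eligible if $|Q| \ge l\cdot h(Q)$ (i.e., at most $|Q|/l$ tuples share any SA value; the empty multiset is $l$-eligible). *)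

(* Defs.v *)
From mathcomp Require Import all_boot.
Set Implicit Arguments. Unset Strict Implicit. Unset Printing Implicit Defensive.

(* A multiset of tuples is a sequence Q : seq T (order irrelevant);
   sa : T -> V gives the sensitive attribute of each tuple. *)
Section Defs.
Variables (T V : eqType) (sa : T -> V).

Definition hv (Q : seq T) (v : V) : nat := count (fun t => sa t == v) Q.

(* pillar height h(Q) = max_v h(Q,v)  (0 for the empty multiset) *)
Definition hmax (Q : seq T) : nat := \max_(t <- Q) hv Q (sa t).

Definition pillar (Q : seq T) (v : V) : bool := (0 < hv Q v) && (hv Q v == hmax Q).

Definition eligible (l : nat) (Q : seq T) : bool := l * hmax Q <= size Q.

Definition submset (Q' Q : seq T) : Prop := forall x, count_mem x Q' <= count_mem x Q.

(* peel l Q Qd : Qd is a possible outcome of repeatedly removing one tuple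
   whose SA value is a pillar of the current multiset, until the current
   multiset is l-eligible (arbitrary tie-breaking). *)
Inductive peel (l : nat) : seq T -> seq T -> Prop :=
| peel_stop Q : eligible l Q -> peel l Q Q
| peel_step Q t Qd : ~~ eligible l Q -> t \in Q -> pillar Q (sa t) ->
    peel l (rem t Q) Qd -> peel l Q Qd.
End Defs.

(* Main.v *)
Require Import Defs.
From mathcomp Require Import all_boot.
From mathcomp Require Import zify.

Section L.
Variables (T V : eqType) (sa : T -> V).

Lemma hv_rem (C : seq T) t v : t \in C -> hv sa C v = hv sa (rem t C) v + (sa t == v).
Proof.
move=> tC; rewrite /hv ((permP (perm_to_rem tC)) _) /=; lia.
Qed.

Lemma hv_le_hmax (C : seq T) v : 0 < hv sa C v -> hv sa C v <= hmax sa C.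
Proof.
rewrite /hv -has_count => /hasP [t tC /eqP <-].
rewrite /hmax; exact: (leq_bigmax_seq (P := xpredT) (F := fun x => hv sa C (sa x)) t tC).
Qed.

Lemma size_le (Q' C : seq T) : (forall v, hv sa Q' v <= hv sa C v) -> size Q' <= size C.
Proof.
elim: Q' C => [|x Q' IH] C H //=.
have: 0 < hv sa C (sa x) by apply: leq_trans (H (sa x)); rewrite /hv /= eqxx.
rewrite /hv -has_count => /hasP [t tC /eqP Ht].
rewrite (perm_size (perm_to_rem tC)) /= ltnS; apply: IH => v.
have := H v; rewrite (@hv_rem _ _ v tC) /hv /= Ht; lia.
Qed.

Lemma sub_count (Q' Q : seq T) p : submset Q' Q -> count p Q' <= count p Q.
Proof.
elim: Q' Q => [|x Q' IH] Q H //=.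
have xQ : x \in Q by rewrite -has_pred1 has_count; apply: leq_trans (H x); rewrite /= eqxx.
rewrite ((permP (perm_to_rem xQ)) _) /= leq_add2l; apply: IH => y.
have := H y; rewrite ((permP (perm_to_rem xQ)) _) /=; lia.
Qed.

Lemma peel_gen l C D : peel sa l C D -> forall Q', eligible sa l Q' ->
  (forall v, hv sa Q' v <= hv sa C v) -> forall v, hv sa Q' v <= hv sa D v.
Proof.
elim=> [C0 _ | C0 t D0 nel tC pil _ IH] Q' el H //.
apply: IH => // v.
have := H v; rewrite (@hv_rem _ _ v tC).
case: eqP => [<- |] /=; last by lia.
rewrite addn1 leq_eqVlt ltnS => /orP [/eqP E|] //.
exfalso; move/negP: nel; apply.
move: pil; rewrite /pillar => /andP [pos /eqP Hm].
have E' : hv sa Q' (sa t) = hv sa C0 (sa t) by rewrite (@hv_rem _ _ (sa t) tC) eqxx addn1.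
have HQ' : 0 < hv sa Q' (sa t) by rewrite E'.
have := @hv_le_hmax _ _ HQ'; rewrite E' Hm => hm.
have := @size_le _ _ H; move: el; rewrite /eligible => el sz.
apply: leq_trans sz; apply: leq_trans el; exact: leq_mul.
Qed.
End L.

Theorem lemma4 (T V : eqType) (sa : T -> V) (l : nat) (Q Qd : seq T) :
  1 <= l -> peel sa l Q Qd ->
  forall Q' : seq T, submset Q' Q -> eligible sa l Q' ->
  forall v : V, hv sa Q' v <= hv sa Qd v.
Proof.
move=> _ P Q' S E; move=> v; apply: (@peel_gen T V sa l Q Qd P Q' E) => w; exact: (@sub_count T Q' Q _ S).
Qed.
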